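(* Let $f_i:\mathbb{R}^d\to\mathbb{R}$ be twice differentiable, let $\lambda\in[0,1)$, $w^t\in\mathbb{R}^d$, $s^t\ge0$, and let $$q_{i,t}(w)=f_i(w^t)+\langle\nabla f_i(w^t),w-w^t\rangle+\tfrac12\langle\nabla^2 f_i(w^t)(w-w^t),w-w^t\rangle .$$ Define $$(w^{t+1/2},s^{t+1/2})=\arg\min_{s\ge0,\,w\in\mathbb{R}^d}\ \tfrac{1-\lambda}{2}\big(\|w-w^t\|^2+(s-s^t)^2\big)+\tfrac{\lambda}{2}s^2\ \text{ s.t. }\ q_{i,t}(w^t)+\langle\nabla q_{i,t}(w^t),w-w^t\rangle\le s,$$ $$(w^{t+1},s^{t+1})=\arg\min_{s\ge0,\,w\in\mathbb{R}^d}\ \tfrac{1-\lambda}{2}\big(\|w-w^{t+1/2}\|^2+(s-s^{t+1/2})^2\big)+\tfrac{\lambda}{2}s^2\ \text{ s.t. }\ q_{i,t}(w^{t+1/2})+\langle\nabla q_{i,t}(w^{t+1/2}),w-w^{t+1/2}\rangle\le s.$$ Then $$w^{t+1}=w^t-(\Gamma_1+\Gamma_2)\nabla f_i(w^t)+\Gamma_2\Gamma_1\nabla^2 f_i(w^t)\nabla f_i(w^t),\qquad s^{t+1}=(1-\lambda)\big((1-\lambda)(s^t+\Gamma_1)+\Gamma_2\big),$$ where $$\Gamma_1=\frac{(f_i(w^t)-(1-\lambda)s^t)_+}{1-\lambda+\|\nabla f_i(w^t)\|^2},$$ $$\Gamma_2=\left(\frac{f_i(w^t)-\Gamma_1\|\nabla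 f_i(w^t)\|^2-(1-\lambda)^2(s^t+\Gamma_1)+\tfrac12\Gamma_1^2\langle\nabla^2 f_i(w^t)\nabla f_i(w^t),\nabla f_i(w^t)\rangle}{1-\lambda+\|\nabla f_i(w^t)-\Gamma_1\nabla^2 f_i(w^t)\nabla f_i(w^t)\|^2}\right)_+,$$ and $(x)_+=x$ if $x\ge0$ and $(x)_+=0$ otherwise.
   Context: This two-step update is called SP2L2$^+$; it approximately solves the L2-slack formulation $\min_{s,w}\frac12 s^2$ s.t. $f_i(w)\le s$ for all $i$. *)

(* Defs.v *)
From HB Require Import structures.
From mathcomp Require Import all_boot all_order all_algebra.
From mathcomp Require Import all_classical all_reals all_analysis.
Set Implicit Arguments. Unset Strict Implicit. Unset Printing Implicit Defensive.
Import Order.TTheory GRing.Theory Num.Theory.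
Import numFieldNormedType.Exports.
Local Open Scope ring_scope.

Section Defs.
Context {R : realType} {d : nat}.

(* Euclidean inner product <u, v> on R^d (NB: the library's norm on matrices
   is the sup norm, so the Euclidean norm is expressed via dot u u). *)
Definition dot (u v : 'rV[R]_d) : R := \sum_(i < d) u 0 i * v 0 i.

Definition grad (f : 'rV[R]_d -> R) (w : 'rV[R]_d) : 'rV[R]_d :=
  \row_j ('d f w (delta_mx 0 j)).

Definition hess (f : 'rV[R]_d -> R) (w : 'rV[R]_d) : 'M[R]_d :=
  \matrix_(i, j) (('d (grad f) w (delta_mx 0 j)) 0 i).

Definition mulMv (H : 'M[R]_d) (v : 'rV[R]_d) : 'rV[R]_d :=
  \row_i (\sum_(j < d) H i j * v 0 j).

Definition twice_differentiable (f : 'rV[R]_d -> R) : Prop :=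
  forall w, differentiable f w /\ differentiable (grad f) w.

Definition qmodel (f : 'rV[R]_d -> R) (wt : 'rV[R]_d) (w : 'rV[R]_d) : R :=
  f wt + dot (grad f wt) (w - wt)
  + 2^-1 * dot (mulMv (hess f wt) (w - wt)) (w - wt).

Definition pospart (x : R) : R := Num.max x 0.

Definition sp_obj (lam : R) (wc : 'rV[R]_d) (sc : R) (w : 'rV[R]_d) (s : R) : R :=
  (1 - lam) / 2 * (dot (w - wc) (w - wc) + (s - sc) ^+ 2) + lam / 2 * s ^+ 2.

Definition sp_feas (q : 'rV[R]_d -> R) (w0 : 'rV[R]_d) (w : 'rV[R]_d) (s : R) : Prop :=
  0 <= s /\ q w0 + dot (grad q w0) (w - w0) <= s.

Definition sp_argmin (lam : R) (q : 'rV[R]_d -> R) (wc : 'rV[R]_d) (sc : R)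
    (w : 'rV[R]_d) (s : R) : Prop :=
  sp_feas q wc w s /\
  forall w' s', sp_feas q wc w' s' -> sp_obj lam wc sc w s <= sp_obj lam wc sc w' s'.

End Defs.

(* Main.v *)
Require Import Defs.
From HB Require Import structures.
From mathcomp Require Import all_boot all_order all_algebra.
From mathcomp Require Import all_classical all_reals all_analysis.
From mathcomp Require Import ring lra.
Import Order.TTheory GRing.Theory Num.Theory.
Import numFieldNormedType.Exports.
Local Open Scope ring_scope.

Section DotLemmas.
Context {R : realType} {d : nat}.
Implicit Types u v w : 'rV[R]_d.

Lemma dotC u v : dot u v = dot v u.
Proof. by apply: eq_bigr => i _; rewrite mulrC. Qed.

Lemma dotDl u v w : dot (u + v) w = dot u w + dot v w.
Proof. by rewrite /dot -big_split; apply: eq_bigr => i _; rewrite mxE mulrDl. Qed.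

Lemma dotZl (a : R) u v : dot (a *: u) v = a * dot u v.
Proof. by rewrite /dot mulr_sumr; apply: eq_bigr => i _; rewrite mxE mulrA. Qed.

Lemma dotNl u v : dot (- u) v = - dot u v.
Proof. by rewrite -scaleN1r dotZl mulN1r. Qed.

Lemma dotBl u v w : dot (u - v) w = dot u w - dot v w.
Proof. by rewrite dotDl dotNl. Qed.

Lemma dotDr u v w : dot w (u + v) = dot w u + dot w v.
Proof. by rewrite dotC dotDl !(dotC w). Qed.

Lemma dotZr (a : R) u v : dot v (a *: u) = a * dot v u.
Proof. by rewrite dotC dotZl dotC. Qed.

Lemma dotNr u v : dot v (- u) = - dot v u.
Proof. by rewrite dotC dotNl dotC. Qed.

Lemma dotBr u v w : dot w (u - v) = dot w u - dot w v.
Proof. by rewrite dotDr dotNr. Qed.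

Lemma dot0l u : dot 0 u = 0.
Proof. by rewrite /dot big1 // => i _; rewrite mxE mul0r. Qed.

Lemma dot0r u : dot u 0 = 0.
Proof. by rewrite dotC dot0l. Qed.

Lemma dot_ge0 u : 0 <= dot u u.
Proof. by apply: sumr_ge0 => i _; rewrite -expr2 sqr_ge0. Qed.

Lemma dot_eq0 u : dot u u = 0 -> u = 0.
Proof.
move=> /eqP; rewrite psumr_eq0; last by move=> i _; rewrite -expr2 sqr_ge0.
move=> /allP H; apply/rowP => j; rewrite mxE.
have := H j (mem_index_enum j); rewrite /= -expr2 sqrf_eq0 => /eqP //.
Qed.

End DotLemmas.

Lemma pospart_ge (R : realType) (x : R) : x <= pospart x.
Proof. rewrite /pospart /Order.max; case: ifP => h //; exact: ltW. Qed.
Lemma pospart_ge0 (R : realType) (x : R) : 0 <= pospart x.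
Proof. rewrite /pospart /Order.max; case: ifP => h //; by rewrite leNgt h. Qed.
Lemma pospart_slack (R : realType) (x : R) : pospart x * (pospart x - x) = 0.
Proof. rewrite /pospart /Order.max; case: ifP => h; [by rewrite mul0r | by rewrite subrr mulr0]. Qed.

Section Argmin.
Context {R : realType} {d : nat}.

Lemma argmin_sol (lam : R) (q : 'rV[R]_d -> R) wc sc w s :
  0 <= lam < 1 -> 0 <= sc -> sp_argmin lam q wc sc w s ->
  w = wc - (pospart (q wc - (1-lam)*sc) / (1 - lam + dot (grad q wc) (grad q wc)))
             *: grad q wc /\
  s = (1-lam) * (sc + pospart (q wc - (1-lam)*sc) / (1 - lam + dot (grad q wc) (grad q wc))).
Proof.
move=> /andP[l0 l1] sc0 [[s0 feas] Hmin].
set a := grad q wc in feas Hmin *; set c := q wc in feas Hmin *.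
set A := dot a a; set P := pospart _; set G := P / _.
have A0 : 0 <= A by apply: dot_ge0.
have D0 : 0 < 1 - lam + A by lra.
have P0 : 0 <= P by apply: pospart_ge0.
have Pge : c - (1 - lam) * sc <= P by apply: pospart_ge.
have Psl : P * (P - (c - (1 - lam) * sc)) = 0 by apply: pospart_slack.
have G0 : 0 <= G by apply: divr_ge0 => //; lra.
have GD : G * (1 - lam + A) = P by rewrite /G divfK // gt_eqF.
set ws := wc - G *: a; set ss := (1 - lam) * (sc + G).
have feas' : sp_feas q wc ws ss.
  split; first by apply: mulr_ge0; lra.
  rewrite /ws addrAC subrr add0r dotNr dotZr -/a -/c -/A.
  have GA : G * A = P - G * (1 - lam) by rewrite -GD; ring.
  rewrite GA /ss; lra.
have := Hmin _ _ feas'.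
rewrite /sp_obj.
set v := w - ws.
have ew : w - wc = v - G *: a by rewrite /v /ws opprD opprK addrA addrK.
have ews : ws - wc = - (G *: a) by rewrite /ws addrAC subrr add0r.
have ev : w - ws = v by [].
clearbody v.
rewrite ew ews in feas *.
rewrite !(dotBl, dotBr, dotZl, dotZr, dotNl, dotNr) (dotC v a) -/A in feas *.
set N := dot v v; set B := dot a v.
have N0 : 0 <= N by apply: dot_ge0.
have GS : G * (c - (1 - lam) * sc - P) = 0.
  rewrite /G mulrAC.
  have -> : P * (c - (1 - lam) * sc - P) = - (P * (P - (c - (1 - lam) * sc))) by ring.
  by rewrite Psl oppr0 mul0r.
move=> Hle.
have E : G * (s - ss - B) = G * (s - (c + (B - G * A))) + G * (c - (1 - lam) * sc - P)
   + (P - G * (1 - lam + A)) * G by rewrite /ss; ring.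
have T : 0 <= (1 - lam) * (G * (s - ss - B)).
  apply: mulr_ge0; first lra.
  rewrite E GS GD subrr mul0r !addr0; apply: mulr_ge0 => //. rewrite -/B in feas; lra.
move: Hle; set L := (X in X <= _); set Rr := (X in _ <= X) => Hle.
have E2 : (1 - lam) * N + (s - ss) ^+ 2 = 2 * (L - Rr) - 2 * ((1 - lam) * (G * (s - ss - B))).
  by rewrite /L /Rr /ss; field.
have key : (1 - lam) * N + (s - ss) ^+ 2 <= 0.
  rewrite E2; move: T; set Q := (1 - lam) * _ => HQ.
  have H1 : L - Rr <= 0 by rewrite subr_le0.
  rewrite -mulrBr pmulr_rle0 //; apply: le_trans H1; rewrite lerBlDr lerDl //.
have X1 : 0 <= (1 - lam) * N by apply: mulr_ge0 => //; rewrite subr_ge0 ltW.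
have X2 : 0 <= (s - ss) ^+ 2 by apply: sqr_ge0.
have : (1 - lam) * N + (s - ss) ^+ 2 == 0.
  by rewrite eq_le key /= addr_ge0.
rewrite paddr_eq0 // => /andP[/eqP h1 /eqP h2].
have N00 : N = 0.
  by move: h1 => /eqP; rewrite mulf_eq0 subr_eq0 => /orP[/eqP h|/eqP //]; move: l1; rewrite -h ltxx.
have ss0 : s = ss by apply/eqP; rewrite -subr_eq0 -sqrf_eq0 h2.
split; last by [].
apply/eqP; rewrite -subr_eq0 ev; apply/eqP; exact: dot_eq0.
Qed.

End Argmin.

Section Quad.
Context {R : realType} {d : nat}.
Implicit Types u v w : 'rV[R]_d.

Lemma mulMvD (H : 'M[R]_d) u v : mulMv H (u + v) = mulMv H u + mulMv H v.
Proof. by apply/rowP => i; rewrite !mxE -big_split; apply: eq_bigr => k _; rewrite mxE mulrDr. Qed.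

Lemma mulMvZ (H : 'M[R]_d) (a : R) u : mulMv H (a *: u) = a *: mulMv H u.
Proof. by apply/rowP => i; rewrite !mxE mulr_sumr; apply: eq_bigr => k _; rewrite mxE mulrCA. Qed.

Lemma mulMvN (H : 'M[R]_d) u : mulMv H (- u) = - mulMv H u.
Proof. by rewrite -scaleN1r mulMvZ scaleN1r. Qed.

Lemma mulMvB (H : 'M[R]_d) u v : mulMv H (u - v) = mulMv H u - mulMv H v.
Proof. by rewrite mulMvD mulMvN. Qed.

Lemma mulMv0 (H : 'M[R]_d) : mulMv H 0 = 0.
Proof. by apply/rowP => i; rewrite !mxE big1 // => k _; rewrite mxE mulr0. Qed.

Lemma dot_delta u j : dot u (delta_mx 0 j) = u 0 j.
Proof.
rewrite /dot (bigD1 j) //= big1 ?addr0; first by rewrite mxE !eqxx mulr1.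
by move=> k /negbTE kj; rewrite mxE kj andbF mulr0.
Qed.

Lemma mulMv_delta (H : 'M[R]_d) j : mulMv H (delta_mx 0 j) = \row_k H k j.
Proof.
apply/rowP => k; rewrite !mxE (bigD1 j) //= big1 ?addr0; first by rewrite mxE !eqxx mulr1.
by move=> l /negbTE lj; rewrite mxE lj andbF mulr0.
Qed.

Variables (c : R) (g : 'rV[R]_d) (H : 'M[R]_d) (wt : 'rV[R]_d).
Let q := fun w : 'rV[R]_d => c + dot g (w - wt) + 2^-1 * dot (mulMv H (w - wt)) (w - wt).

Lemma q_expand w v (h : R) :
  q (h *: v + w) - q w =
  h * (dot g v + 2^-1 * (dot (mulMv H v) (w - wt) + dot (mulMv H (w - wt)) v))
  + h ^+ 2 * (2^-1 * dot (mulMv H v) v).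
Proof.
rewrite /q.
have -> : h *: v + w - wt = h *: v + (w - wt) by rewrite addrA.
move: (w - wt) => u.
rewrite !(mulMvD, mulMvZ, dotDl, dotDr, dotZl, dotZr).
ring.
Qed.

Definition pc (k : 'I_d) : 'rV[R]_d -> R := fun w => w 0 k.

Lemma q_diff w : differentiable q w.
Proof.
have -> : q = cst c + \sum_(k < d) (cst (g 0 k) * (pc k - cst (wt 0 k)))
   + cst (2^-1) * \sum_(k < d) ((\sum_(l < d) (cst (H k l) * (pc l - cst (wt 0 l))))
                                 * (pc k - cst (wt 0 k))).
  apply: funext => x; rewrite /q /= !fct_sumE /dot /=.
  congr (_ + _ + _ * _).
    by apply: eq_bigr => k _; rewrite /pc !mxE.
  apply: eq_bigr => k _; rewrite /pc !mxE fct_sumE; congr (_ * _).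
  by apply: eq_bigr => l _; rewrite !mxE.
apply: differentiableD; first apply: differentiableD.
- exact: differentiable_cst.
- apply: differentiable_sum => k; apply: differentiableM; first exact: differentiable_cst.
  apply: differentiableB; [exact: differentiable_coord | exact: differentiable_cst].
- apply: differentiableM; first exact: differentiable_cst.
  apply: differentiable_sum => k; apply: differentiableM.
    apply: differentiable_sum => l; apply: differentiableM; first exact: differentiable_cst.
    apply: differentiableB; [exact: differentiable_coord | exact: differentiable_cst].
  apply: differentiableB; [exact: differentiable_coord | exact: differentiable_cst].
Qed.

Lemma q_dir w v :
  'd q w v = dot g v + 2^-1 * (dot (mulMv H v) (w - wt) + dot (mulMv H (w - wt)) v).
Proof.
rewrite -deriveE; last exact: q_diff.
set A := dot g v + _; pose B := 2^-1 * dot (mulMv H v) v.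
rewrite /derive; apply: cvg_lim => //.
apply: (@cvg_trans _ (((fun h : R => A + h * B) @ 0^')%classic)).
  apply: near_eq_cvg; near=> h.
  have h0 : h != 0 by near: h; exact: nbhs_dnbhs_neq.
  rewrite /= q_expand -/A -/B.
  rewrite [_ *: _]/(GRing.scale _ _) /=.
  by field.
apply: cvg_within_filter.
suff : ((fun h : R => A + h * B) @ (0 : R) --> A + 0 * B)%classic by rewrite mul0r addr0.
apply: cvgD; first exact: cvg_cst.
apply: cvgMl; exact: cvg_id.
Unshelve. all: by end_near.
Qed.

Lemma q_grad w : (forall i j, H i j = H j i) -> grad q w = g + mulMv H (w - wt).
Proof.
move=> Hs; apply/rowP => j; rewrite !mxE q_dir dot_delta mulMv_delta.
rewrite dot_delta mxE /dot.
have -> : \sum_(i < d) (\row_k H k j) 0 i * (w - wt) 0 i = (mulMv H (w - wt)) 0 j.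
  by rewrite mxE; apply: eq_bigr => k _; rewrite mxE Hs.
rewrite mxE; congr (_ + _).
set S := \sum_(_ < d) _.
by field.
Qed.

End Quad.

Section Schwarz.
Context {R : realType} {d : nat}.
Variable f : 'rV[R]_d -> R.
Hypothesis hf : forall w, differentiable f w.
Hypothesis hg : forall w, differentiable (grad f) w.

Lemma line_derive (y e : 'rV[R]_d) (s : R) :
  is_derive s 1 (fun t : R => f (y + t *: e)) ('d f (y + s *: e) e).
Proof.
have E : (fun h : R => h^-1 *: (((fun t : R => f (y + t *: e)) \o shift s) (h *: 1)
                                 - f (y + s *: e))) =
         (fun h : R => h^-1 *: ((f \o shift (y + s *: e)) (h *: e) - f (y + s *: e))).
  apply: funext => h /=; congr (_ *: (f _ - _)).
  by rewrite [h *: 1]mulr1 scalerDl addrCA addrA.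
apply: DeriveDef.
  rewrite /derivable E; exact: diff_derivable.
by rewrite /derive E -deriveE.
Qed.

Lemma diff_mvt (y1 y2 e : 'rV[R]_d) (t : R) : 0 <= t ->
  exists2 c, c \in `[0, t]%R &
    (f (y1 + t *: e) - f (y2 + t *: e)) - (f y1 - f y2) =
    ('d f (y1 + c *: e) e - 'd f (y2 + c *: e) e) * t.
Proof.
move=> t0.
pose phi := fun s : R => f (y1 + s *: e) - f (y2 + s *: e).
have dphi : forall s : R, is_derive s (1:R) phi ('d f (y1 + s *: e) e - 'd f (y2 + s *: e) e).
  move=> s; have h1 := line_derive y1 e s; have h2 := line_derive y2 e s.
  apply: DeriveDef; first by apply: derivableB.
  by rewrite deriveB // !derive_val.
have := @MVT_segment R phi (fun s => 'd f (y1 + s *: e) e - 'd f (y2 + s *: e) e) 0 t t0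
  (fun s _ => dphi s).
case.
  apply: derivable_within_continuous => s _; exact: ex_derive.
move=> c ct E; exists c => //.
by move: E; rewrite /phi !scale0r !addr0 subr0.
Qed.

Definition e_ (i : 'I_d) : 'rV[R]_d := delta_mx 0 i.

Lemma entry_le (M : 'rV[R]_d) i : `|M 0 i| <= `|M|.
Proof.
rewrite [X in _ <= X]/Num.norm /= mx_normrE.
exact: (le_bigmax _ (fun ij : 'I_1 * 'I_d => `|M ij.1 ij.2|) (0, i)).
Qed.

Lemma obound (x : 'rV[R]_d) (eps : R) : 0 < eps ->
  exists2 del : R, 0 < del & forall u : 'rV[R]_d, `|u| < del -> forall i,
   `|'d f (u + x) (e_ i) - 'd f x (e_ i) - ('d (grad f) x u) 0 i| <= eps * `|u|.
Proof.
move=> e0.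
have := diff_locally (hg x).
move=> /eqaddoP /(_ eps e0) /nbhs_norm0P [del del0 Hdel].
exists del => // u ud i.
move: (Hdel u ud) => /= H.
have K := entry_le ((grad f \o +%R^~ x - (cst (grad f x) + 'd (grad f) x)) u) i.
move: K; rewrite !mxE /= => K.
rewrite opprD addrA in K; exact: (le_trans K H).
Qed.

Lemma fin_ineq (eps K t c D1 D2 Dx Hj Hi N1 N2 Del : R) :
 0 < eps -> 0 <= K -> 0 < t ->
 Del = (D1 - D2) * t ->
 `|D1 - Dx - (t * Hj + c * Hi)| <= eps / (2 * (K + 1)) * N1 -> N1 <= t * K ->
 `|D2 - Dx - c * Hi| <= eps / (2 * (K + 1)) * N2 -> N2 <= t * K ->
 `|Del - t ^+ 2 * Hj| <= eps * t ^+ 2.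
Proof.
move=> e0 K0 t0 -> h1 n1 h2 n2.
have K1 : 0 < K + 1 by rewrite ltr_pwDr.
have e'0 : 0 < eps / (2 * (K + 1)) by rewrite divr_gt0 // mulr_gt0.
have -> : (D1 - D2) * t - t ^+ 2 * Hj
   = t * ((D1 - Dx - (t * Hj + c * Hi)) - (D2 - Dx - c * Hi)) by ring.
rewrite normrM (ger0_norm (ltW t0)).
have h3 := ler_normB (D1 - Dx - (t * Hj + c * Hi)) (D2 - Dx - c * Hi).
set e' := eps / _ in h1 h2 e'0 *.
have h4 : `|D1 - Dx - (t * Hj + c * Hi) - (D2 - Dx - c * Hi)| <= e' * (t * K) + e' * (t * K).
  apply: (le_trans h3).
  apply: lerD.
    apply: (le_trans h1); rewrite ler_wpM2l // ltW //.
  apply: (le_trans h2); rewrite ler_wpM2l // ltW //.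
have h5 : e' * (t * K) + e' * (t * K) <= eps * t.
  have -> : e' * (t * K) + e' * (t * K) = eps * t * (K / (K + 1)).
    by rewrite /e'; field; rewrite gt_eqF.
  rewrite ler_piMr ?mulr_ge0 ?ltW //.
  by rewrite ltr_pdivrMr // mul1r ltrDl.
rewrite expr2 mulrA [eps * t]mulrC -mulrA.
apply: ler_wpM2l; [exact: ltW | exact: (le_trans h4 h5)].
Qed.

Lemma delta_bound (x : 'rV[R]_d) (i j : 'I_d) (eps : R) : 0 < eps ->
  exists2 del : R, 0 < del & forall t : R, 0 < t -> t < del ->
  `|(f (x + t *: e_ j + t *: e_ i) - f (x + t *: e_ i) - f (x + t *: e_ j) + f x)
     - t ^+ 2 * ('d (grad f) x (e_ j)) 0 i| <= eps * t ^+ 2.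
Proof.
move=> e0.
have K0 : 0 <= `|e_ i| + `|e_ j| by rewrite addr_ge0.
move: K0; set K := `|e_ i| + `|e_ j| => K0.
have K1 : 0 < K + 1 by rewrite ltr_pwDr.
have e'0 : 0 < eps / (2 * (K + 1)) by rewrite divr_gt0 // mulr_gt0.
have [del0 d0 Hd] := obound x _ e'0.
exists (del0 / (K + 1)); first by rewrite divr_gt0.
move=> t t0 tdel.
have [c cI E] := diff_mvt (x + t *: e_ j) x (e_ i) _ (ltW t0).
move: cI; rewrite in_itv /= => /andP[c0 ct].
have tK : t * K < del0.
  rewrite ltr_pdivlMr // in tdel.
  apply: le_lt_trans tdel; rewrite ler_pM2l // lerDl //.
have n1 : `|t *: e_ j + c *: e_ i| <= t * K.
  apply: (le_trans (ler_normD _ _)).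
  rewrite !normrZ (ger0_norm (ltW t0)) (ger0_norm c0) /K mulrDr addrC lerD2r.
  by rewrite ler_wpM2r // normr_ge0.
have n2 : `|c *: e_ i| <= t * K.
  rewrite normrZ (ger0_norm c0) /K mulrDr.
  apply: (le_trans (y := t * `|e_ i|)); first by rewrite ler_wpM2r // normr_ge0.
  by rewrite lerDl; apply: mulr_ge0; [exact: ltW | exact: normr_ge0].
have h1 := Hd _ (le_lt_trans n1 tK) i.
have h2 := Hd _ (le_lt_trans n2 tK) i.
have L1 : 'd (grad f) x (t *: e_ j + c *: e_ i)
   = t *: 'd (grad f) x (e_ j) + c *: 'd (grad f) x (e_ i).
  by rewrite linearD !linearZ.
have L2 : 'd (grad f) x (c *: e_ i) = c *: 'd (grad f) x (e_ i).
  by rewrite linearZ.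
have ex1 : t *: e_ j + c *: e_ i + x = x + t *: e_ j + c *: e_ i by rewrite addrC addrA.
have ex2 : c *: e_ i + x = x + c *: e_ i by rewrite addrC.
rewrite L1 ex1 !mxE in h1.
rewrite L2 ex2 !mxE in h2.
apply: (fin_ineq _ _ _ _ _ _ _ _ _ _ _ _ e0 K0 t0 _ h1 n1 h2 n2).
have EE : forall a b c0 e : R, a - b - c0 + e = (a - b) - (c0 - e) by move=> *; ring.
by rewrite EE; exact: E.
Qed.

Lemma small_eq0 (a : R) : (forall eps : R, 0 < eps -> `|a| <= 2 * eps) -> a = 0.
Proof.
move=> H; apply/eqP; apply/negPn/negP => a0.
have ha : 0 < `|a| by rewrite normr_gt0.
have := H (`|a| / 4) (divr_gt0 ha (ltr0Sn _ _)).
apply/negP; rewrite -ltNge.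
rewrite mulrCA -{2}[`|a|]mulr1 ltr_pM2l //.
by rewrite ltr_pdivrMr // mul1r ltr_nat.
Qed.

Lemma hess_sym (x : 'rV[R]_d) i j : hess f x i j = hess f x j i.
Proof.
rewrite !mxE -/(e_ i) -/(e_ j).
apply/eqP; rewrite -subr_eq0; apply/eqP; apply: small_eq0 => eps e0.
have [d1 d10 B1] := delta_bound x i j _ e0.
have [d2 d20 B2] := delta_bound x j i _ e0.
pose t := Num.min d1 d2 / 2.
have m0 : 0 < Num.min d1 d2 by rewrite lt_min d10 d20.
have t0 : 0 < t by rewrite divr_gt0.
have tm : t < Num.min d1 d2 by rewrite /t ltr_pdivrMr // ltr_pMr // ltr1n.
have t1 : t < d1 by apply: lt_le_trans tm _; rewrite ge_min lexx.
have t2 : t < d2 by apply: lt_le_trans tm _; rewrite ge_min lexx orbT.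
have b1 := B1 t t0 t1.
have b2 := B2 t t0 t2.
have EE : f (x + t *: e_ i + t *: e_ j) - f (x + t *: e_ j) - f (x + t *: e_ i) + f x
        = f (x + t *: e_ j + t *: e_ i) - f (x + t *: e_ i) - f (x + t *: e_ j) + f x.
  by rewrite [x + t *: e_ i + _]addrAC [_ - f (x + t *: e_ j) - _]addrAC.
rewrite EE in b2.
move: b1 b2.
set D := f _ - _ - _ + _.
set a := 'd (grad f) x (e_ j) 0 i; set b := 'd (grad f) x (e_ i) 0 j.
move=> b1 b2.
have t20 : 0 < t ^+ 2 by rewrite exprn_gt0.
have : t ^+ 2 * `|a - b| <= t ^+ 2 * (2 * eps).
  have -> : t ^+ 2 * `|a - b| = `|(D - t ^+ 2 * b) - (D - t ^+ 2 * a)|.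
    by rewrite -[in LHS](ger0_norm (ltW t20)) -normrM; congr `|_|; ring.
  apply: (le_trans (ler_normB _ _)).
  have -> : t ^+ 2 * (2 * eps) = eps * t ^+ 2 + eps * t ^+ 2 by ring.
  exact: lerD.
by rewrite ler_pM2l.
Qed.

End Schwarz.

Lemma pospart_div (R : realType) (X Y : R) : 0 < Y -> pospart X / Y = pospart (X / Y).
Proof.
move=> Y0; rewrite /pospart /Order.max ltr_pdivrMr // mul0r.
by case: ifP => _; rewrite ?mul0r.
Qed.

Theorem lemma7 (R : realType) (d : nat) (f : 'rV[R]_d -> R) (lam : R)
    (wt : 'rV[R]_d) (st : R) :
  twice_differentiable f -> 0 <= lam < 1 -> 0 <= st ->
  let g := grad f wt in
  let H := hess f wt in
  let q := qmodel f wt in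
  let G1 := pospart (f wt - (1 - lam) * st) / (1 - lam + dot g g) in
  let G2 := pospart
     ((f wt - G1 * dot g g - (1 - lam) ^+ 2 * (st + G1)
        + 2^-1 * G1 ^+ 2 * dot (mulMv H g) g)
      / (1 - lam + dot (g - G1 *: mulMv H g) (g - G1 *: mulMv H g))) in
  forall (wh : 'rV[R]_d) (sh : R), sp_argmin lam q wt st wh sh ->
  forall (w1 : 'rV[R]_d) (s1 : R), sp_argmin lam q wh sh w1 s1 ->
    w1 = wt - (G1 + G2) *: g + (G2 * G1) *: mulMv H g /\
    s1 = (1 - lam) * ((1 - lam) * (st + G1) + G2).
Proof.
move=> htd hl hst g H q G1 G2 wh sh Hh w1 s1 H1.
have hf : forall w, differentiable f w := fun w => (htd w).1.
have hg : forall w, differentiable (grad f) w := fun w => (htd w).2.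
have Hs : forall i j, H i j = H j i := hess_sym _ hf hg wt.
have gq : forall w, grad q w = g + mulMv H (w - wt) := fun w => q_grad (f wt) g H wt w Hs.
have qv : forall w, q w = f wt + dot g (w - wt) + 2^-1 * dot (mulMv H (w - wt)) (w - wt)
  by [].
have /andP[l0 l1] := hl.
have A0 : 0 <= dot g g by apply: dot_ge0.
have G10 : 0 <= G1 by apply: divr_ge0; [exact: pospart_ge0 | lra].
have [ewh esh] := argmin_sol _ _ _ _ _ _ hl hst Hh.
rewrite gq qv subrr mulMv0 dot0r dot0l mulr0 !addr0 -/G1 in ewh esh.
have sh0 : 0 <= sh by rewrite esh; apply: mulr_ge0; lra.
have [ew1 es1] := argmin_sol _ _ _ _ _ _ hl sh0 H1.
have ewt : wh - wt = - (G1 *: g) by rewrite ewh addrAC subrr add0r.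
rewrite gq qv ewt mulMvN mulMvZ in ew1 es1.
have Y0 : 0 < 1 - lam + dot (g - G1 *: mulMv H g) (g - G1 *: mulMv H g).
  have := dot_ge0 (g - G1 *: mulMv H g); lra.
have eG : pospart (f wt + dot g (- (G1 *: g)) + 2^-1 * dot (- (G1 *: mulMv H g)) (- (G1 *: g))
                - (1 - lam) * sh) /
          (1 - lam + dot (g + - (G1 *: mulMv H g)) (g + - (G1 *: mulMv H g))) = G2.
  rewrite pospart_div //; congr (pospart (_ / _)).
  rewrite esh !(dotNl, dotNr, dotZl, dotZr); ring.
rewrite eG in ew1 es1.
split.
  rewrite ew1 ewh; apply/rowP => k; rewrite !mxE; ring.
by rewrite es1 esh.
Qed.
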